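(* Fix an integer $N\ge 3$. There is a conditional (adaptive) sampling procedure which, knowing only $N$, queries the values $F_{\vec B}(x_1),\dots,F_{\vec B}(x_k)$ of an unknown CDF $F_{\vec B}$ at $k\le\lfloor N/2\rfloor$ points, where each query point $x_j$ is determined by $N$ and the previously obtained values $F_{\vec B}(x_1),\dots,F_{\vec B}(x_{j-1})$, and which, for every binary digit vector $\vec B=(b_0,\dots,b_{N-1})$ with $2\le\|\vec B\|\le N-1$, completely determines $\vec B$ (and hence $F_{\vec B}$) from these values.
   Context: A binary digit vector of length (scale factor) $N\ge3$ is $\vec B=(b_0,\dots,b_{N-1})\in\{0,1\}^N$ with $2\le\|\vec B\|:=\sum_i b_i\le N-1$; its digit set is $D=\{i:b_i=1\}$. With $\phi_d(x)=(x+d)/N$ for $d\in D$, let $\mu_{\vec B}$ be the unique Borel probability measure with $\mu_{\vec B}=\frac{1}{\|\vec B\|}\sum_{d\in D}\mu_{\vec B}\circ\phi_d^{-1}$; it is supported on the attractor $C_{\vec B}\subset[0,1]$ of $\{\phi_d\}_{d\in D}$. The CDF is $F_{\vec B}(x)=\mu_{\vec B}([0,x])$, $x\in[0,1]$. *)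

(* Defs.v *)
From HB Require Import structures.
From mathcomp Require Import all_boot all_order all_algebra.
From mathcomp Require Import all_classical all_reals all_analysis.
Set Implicit Arguments. Unset Strict Implicit. Unset Printing Implicit Defensive.
Import Order.TTheory GRing.Theory Num.Theory.
Local Open Scope ring_scope.
Local Open Scope classical_set_scope.

Definition bnorm (N : nat) (B : {ffun 'I_N -> bool}) : nat := (\sum_(i < N) B i)%N.

Definition phi {R : realType} (N d : nat) (x : R) : R := (x + d%:R) / N%:R.

Definition self_similar {R : realType} (N : nat) (B : {ffun 'I_N -> bool})
  (mu : probability R R) : Prop :=
  forall A : set R, measurable A ->
    (mu A = ((bnorm B)%:R^-1)%:E *
           \sum_(d < N | B d) mu (phi N d @^-1` A))%E.

Definition cdf_of {R : realType} (mu : probability R R) (x : R) : R :=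
  fine (mu `[0, x]).

(* Adaptive querying: the strategy q maps the list of previously obtained
   values (F(x_1),...,F(x_{j-1})) to the next query point x_j.
   run q F k = [:: F(x_1); ...; F(x_k)]. *)
Fixpoint run {R : Type} (q : seq R -> R) (F : R -> R) (k : nat) : seq R :=
  match k with
  | 0 => [::]
  | k'.+1 => let s := run q F k' in rcons s (F (q s))
  end.

(* Main.v *)
Require Import Defs.
From HB Require Import structures.
From mathcomp Require Import all_boot all_order all_algebra.
From mathcomp Require Import all_classical all_reals all_analysis.
From mathcomp Require Import ring lra.
Import Order.TTheory GRing.Theory Num.Theory.
Local Open Scope ring_scope.
Local Open Scope classical_set_scope.

Section Z.
Variable R : realType.

Fixpoint zf (a b : bool) (n : nat) (i : nat) : R :=
  match i with
  | 0 => (a + b)%N%:R / n%:R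
  | i'.+1 => (a%:R + b%:R * zf a b n i') / n%:R
  end.

Lemma zf00 n i : zf false false n i = 0.
Proof. by elim: i => [|i IH] /=; rewrite ?IH ?add0n ?mulr0n ?mul0r ?addr0 ?mul0r. Qed.

Lemma zf10 n i : zf true false n i = n%:R^-1.
Proof. by elim: i => [|i IH] /=; rewrite ?addn0 ?mulr0n ?mulr1n ?mul0r ?addr0 ?mul1r. Qed.

Lemma zf01 n i : zf false true n i = (n%:R ^+ i.+1)^-1.
Proof.
elim: i => [|i IH] /=; first by rewrite add0n mulr1n mul1r expr1.
by rewrite IH ?mulr0n ?mulr1n add0r mul1r -invfM -exprSr.
Qed.

Lemma zf11S n i : zf true true n i.+1 = (1 + zf true true n i) / n%:R.
Proof. by rewrite /= mulr1n mul1r. Qed.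

Lemma zf11_ge0 n i : 0 <= zf true true n i.
Proof.
elim: i => [|i IH]; first by rewrite /= divr_ge0 ?ler0n.
by rewrite zf11S divr_ge0 ?ler0n // addr_ge0.
Qed.

Lemma zf11_2 i : zf true true 2 i = 1.
Proof.
elim: i => [|i IH]; first by rewrite /= divff.
by rewrite zf11S IH divff.
Qed.

Lemma zf11_lo n i : (3 <= n)%N -> 1 < (n%:R - 1) * zf true true n i.
Proof.
move=> n3; have x3 : 3%:R <= n%:R :> R by rewrite ler_nat.
elim: i => [|i IH].
  rewrite /= mulrA ltr_pdivlMr ?ltr0n ?(leq_trans _ n3) // mul1r natrD.
  lra.
rewrite zf11S mulrA ltr_pdivlMr ?ltr0n ?(leq_trans _ n3) // mul1r.
nra.
Qed.

Lemma zf11_le n i : (2 <= n)%N -> zf true true n i <= 2 / n%:R.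
Proof.
move=> n2; have x2 : 2%:R <= n%:R :> R by rewrite ler_nat.
have n0 : 0 < n%:R :> R by rewrite ltr0n (leq_trans _ n2).
elim: i => [|i IH]; first by rewrite /= natrD.
rewrite zf11S ler_pM2r ?invr_gt0 //.
have : 2 / n%:R <= 1 :> R by rewrite ler_pdivrMr // mul1r.
lra.
Qed.

Lemma zf11_hi n i : (3 <= n)%N -> (n%:R - 2) * zf true true n i.+1 < 1.
Proof.
move=> n3; have x3 : 3%:R <= n%:R :> R by rewrite ler_nat.
have n0 : 0 < n%:R :> R by rewrite ltr0n (leq_trans _ n3).
have h := @zf11_le n i (leq_trans (isT : (2 <= 3)%N) n3).
rewrite zf11S mulrA ltr_pdivrMr // mul1r.
have h2 : (n%:R - 2) * (1 + zf true true n i) <= (n%:R - 2) * (1 + 2 / n%:R).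
  by rewrite ler_wpM2l ?lerD2l // subr_ge0 (le_trans _ x3) // ler_nat.
apply: (le_lt_trans h2).
rewrite mulrDr mulr1.
have e : (n%:R - 2) * (2 / n%:R) = 2 - 4 / n%:R :> R by field; rewrite lt0r_neq0.
have : 0 < 4 / n%:R :> R by rewrite divr_gt0.
lra.
Qed.


Lemma zfB_small n K N : (0 < N)%N -> (2 <= n)%N -> (N <= K)%N ->
  zf false true n K < N%:R^-1.
Proof.
move=> N0 n2 NK; rewrite zf01 ltf_pV2 ?posrE ?exprn_gt0 ?ltr0n ?(leq_trans _ n2) //.
rewrite -natrX ltr_nat; apply: (leq_ltn_trans NK).
apply: (ltn_trans (ltnSn K)); apply: (leq_trans (ltn_expl _ (isT : (1 < 2)%N))).
by rewrite leq_exp2r.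
Qed.

Lemma zfA_big n K N : (2 <= n)%N -> (n < N)%N -> N%:R^-1 < zf true false n K.
Proof.
move=> n2 nN; rewrite zf10 ltf_pV2 ?posrE ?ltr0n ?(leq_trans _ n2) ?ltr_nat //.
exact: (leq_trans _ nN).
Qed.

Lemma zfC_big n K N : (2 <= n)%N -> (n < N)%N -> N%:R^-1 < zf true true n K.+1.
Proof.
move=> n2 nN; have n0 : 0 < n%:R :> R by rewrite ltr0n (leq_trans _ n2).
apply: (@lt_le_trans _ _ n%:R^-1).
  by rewrite ltf_pV2 ?posrE ?ltr0n ?(leq_trans _ n2) ?ltr_nat // (leq_trans _ nN).
rewrite zf11S -[X in X <= _]mul1r ler_pM2r ?invr_gt0 //.
by rewrite lerDl zf11_ge0.
Qed.

Lemma zfC_mono n1 n2 i : (2 <= n1)%N -> (n1 < n2)%N ->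
  zf true true n2 i < zf true true n1 i.
Proof.
move=> n12 lt12; have n10 : 0 < n1%:R :> R by rewrite ltr0n (leq_trans _ n12).
have n20 : 0 < n2%:R :> R by rewrite ltr0n (leq_trans _ (ltnW lt12)) // (leq_trans _ n12).
have hinv : n2%:R^-1 < n1%:R^-1 :> R by rewrite ltf_pV2 ?posrE // ltr_nat.
elim: i => [|i IH].
  by rewrite /= addn1 ltr_pM2l // ltr0n.
rewrite !zf11S; apply: (@lt_trans _ _ ((1 + zf true true n1 i) / n2%:R)).
  by rewrite ltr_pM2r ?invr_gt0 // ltrD2l.
by rewrite ltr_pM2l // ltr_pwDl ?zf11_ge0.
Qed.

Lemma zfAC n1 n2 K : (2 <= n1)%N -> (2 <= n2)%N ->
  zf true false n2 K.+1 = zf true true n1 K.+1 -> False.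
Proof.
move=> n12 n22; rewrite zf10 => e.
have n20 : 0 < n2%:R :> R by rewrite ltr0n (leq_trans _ n22).
case: (ltngtP n1 2) => [|h3|h2].
- by rewrite ltnNge n12.
- have lo := @zf11_lo n1 K.+1 h3; have hi := @zf11_hi n1 K h3.
  rewrite -e in lo hi.
  move: lo; rewrite ltr_pdivlMr // mul1r => lo.
  move: hi; rewrite ltr_pdivrMr // mul1r => hi.
  have a1 : (n2.+1)%:R < n1%:R :> R by rewrite -natr1; lra.
  have a2 : n1%:R < (n2.+2)%:R :> R by rewrite -addn2 natrD; lra.
  rewrite !ltr_nat in a1 a2.
  by move: (leq_trans a2 a1); rewrite ltnn.
- move: e; rewrite h2 zf11_2 => e.
  have : n2%:R^-1 <= 2^-1 :> R.
    by rewrite lef_pV2 ?posrE ?ltr0n ?ler_nat // (leq_trans _ n22).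
  rewrite e; lra.
Qed.

Lemma zfS a b n i : zf a b n i.+1 = (a%:R + b%:R * zf a b n i) / n%:R.
Proof. by []. Qed.

Lemma zf0 a b n : zf a b n 0 = (a + b)%N%:R / n%:R.
Proof. by []. Qed.

Lemma zf_pos a b n i : (2 <= n)%N -> a || b -> 0 < zf a b n i.
Proof.
move=> n2; have n0 : 0 < n%:R :> R by rewrite ltr0n (leq_trans _ n2).
case: a; case: b => // _.
- case: i => [|i]; first by rewrite zf0 divr_gt0 // ltr0n.
  have h := zf11_ge0 n i; rewrite zf11S divr_gt0 //; lra.
- by rewrite zf10 invr_gt0.
- by rewrite zf01 invr_gt0 exprn_gt0.
Qed.

Arguments zf : simpl never.

Lemma zf_inj K (a1 b1 a2 b2 : bool) n1 n2 N : (0 < N)%N -> (N <= K.+1)%N ->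
  (2 <= n1)%N -> (n1 < N)%N -> (2 <= n2)%N -> (n2 < N)%N ->
  a1 || b1 -> a2 || b2 -> zf a1 b1 n1 K.+1 = zf a2 b2 n2 K.+1 ->
  [/\ a1 = a2, b1 = b2 & n1 = n2].
Proof.
move=> N0 NK h1 h1' h2 h2' ab1 ab2 e.
have B1 := @zfB_small n1 K.+1 N N0 h1 NK; have B2 := @zfB_small n2 K.+1 N N0 h2 NK.
have A1 := @zfA_big n1 K.+1 N h1 h1'; have A2 := @zfA_big n2 K.+1 N h2 h2'.
have C1 := @zfC_big n1 K N h1 h1'; have C2 := @zfC_big n2 K N h2 h2'.
have injn : n1 <> n2 -> False -> False by [].
move: ab1 ab2 e B1 B2 A1 A2 C1 C2; case: a1; case: b1; case: a2; case: b2 => //= _ _ e B1 B2 A1 A2 C1 C2.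
all: try by [exfalso; apply: (@zfAC n1 n2 K h1 h2); rewrite e
  | exfalso; apply: (@zfAC n2 n1 K h2 h1); rewrite e
  | exfalso; apply: (@zfAC n1 n2 K h1 h2); rewrite -e
  | exfalso; apply: (@zfAC n2 n1 K h2 h1); rewrite -e
  | move: (lt_trans B2 C1); rewrite e ltxx | move: (lt_trans B1 C2); rewrite e ltxx
  | move: (lt_trans B2 A1); rewrite e ltxx | move: (lt_trans B1 A2); rewrite e ltxx
  | move: (lt_trans B2 C1); rewrite -e ltxx | move: (lt_trans B1 C2); rewrite -e ltxx
  | move: (lt_trans B2 A1); rewrite -e ltxx | move: (lt_trans B1 A2); rewrite -e ltxx].
- split => //; case: (ltngtP n1 n2) => // h.
    by have := @zfC_mono n1 n2 K.+1 h1 h; rewrite e ltxx.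
  by have := @zfC_mono n2 n1 K.+1 h2 h; rewrite e ltxx.
- split => //; move: e; rewrite !zf10 => e; have e' := invr_inj e.
  by apply/eqP; rewrite -(eqr_nat R) e'.
- split => //; move: e; rewrite !zf01 => e; have e' := invr_inj e.
  by apply/eqP; rewrite -(@eqn_exp2r _ _ K.+2) // -(eqr_nat R) !natrX e'.
Qed.

End Z.

Section Strat.
Variable R : realType.

Fixpoint Wp (N m i : nat) : R :=
  match i with
  | 0 => (m.*2.+2)%:R / N%:R
  | i'.+1 => ((m.*2.+1)%:R + Wp N m i') / N%:R
  end.

Lemma Wp0 N m : Wp N m 0 = (m.*2.+2)%:R / N%:R.
Proof. by []. Qed.

Lemma WpS N m i : Wp N m i.+1 = ((m.*2.+1)%:R + Wp N m i) / N%:R.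
Proof. by []. Qed.

Arguments Wp : simpl never.

Definition Kp (N m : nat) : R := ((m.*2.+1)%:R + (m.*2)%:R / N%:R) / N%:R.

Definition state := (seq bool * option nat)%type.

Definition step (N : nat) (st : state) (y : R) : state :=
  match st.2 with
  | None =>
    if y == 0 then (st.1 ++ [:: false; false], None)
    else match [pick t : bool * bool * 'I_N | (2 <= t.2)%N && (y == zf R t.1.1 t.1.2 t.2 N)] with
         | Some t => (st.1 ++ [:: t.1.1; t.1.2], Some (nat_of_ord t.2))
         | None => st
         end
  | Some n =>
    let e := n%:R * y - (count id st.1)%:R in
    if e == 0 then (st.1 ++ [:: false; false], Some n)
    else if e == 1 then (st.1 ++ [:: true; false], Some n)
    else if e < 1 then (st.1 ++ [:: false; true], Some n)
    else (st.1 ++ [:: true; true], Some n)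
  end.

Definition decode (N : nat) (s : seq R) : state := foldl (step N) ([::], None) s.

Definition rawpt (N : nat) (st : state) : R :=
  match st.2 with
  | None => Wp N (size st.1)./2 N
  | Some _ => Kp N (size st.1)./2
  end.

Definition qs (N : nat) (s : seq R) : R := Num.min 1 (Num.max 0 (rawpt N (decode N s))).

Definition decs (N : nat) (s : seq R) : {ffun 'I_N -> bool} :=
  let st := decode N s in
  let full := rcons st.1 (if st.2 is Some n then (count id st.1 < n)%N else false) in
  [ffun i : 'I_N => nth false full i].

Lemma decode_rcons N s y : decode N (rcons s y) = step N (decode N s) y.
Proof. by rewrite /decode foldl_rcons. Qed.

End Strat.

Arguments Wp : simpl never.
Arguments zf : simpl never.


Section Meas.
Variables (R : realType) (N' : nat).
Local Notation N := N'.+1.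
Variable B : {ffun 'I_N -> bool}.
Variable mu : probability R R.
Hypothesis hss : self_similar B mu.
Hypothesis hn : (2 <= bnorm B)%N.
Hypothesis hN' : (2 <= N')%N.

Definition P (A : set R) : R := fine (mu A).

Lemma muE A : measurable A -> mu A = (P A)%:E.
Proof. by move=> mA; rewrite /P fineK // fin_num_measure. Qed.

Lemma P_ge0 A : 0 <= P A.
Proof. by rewrite /P fine_ge0. Qed.

Lemma P_le A C : measurable A -> measurable C -> A `<=` C -> P A <= P C.
Proof.
by move=> mA mC AC; rewrite -lee_fin -!muE //; apply: le_measure; rewrite ?inE.
Qed.

Lemma P_T : P setT = 1.
Proof. by rewrite /P probability_setT. Qed.

Lemma P_le1 A : measurable A -> P A <= 1.
Proof. by move=> mA; rewrite -P_T; apply: P_le. Qed.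

Lemma P_C A : measurable A -> P (~` A) = 1 - P A.
Proof. by move=> mA; rewrite /P probability_setC // muE. Qed.

Lemma ssP A (S : 'I_N -> set R) : measurable A ->
  (forall d : 'I_N, phi N d @^-1` A = S d) -> (forall d, measurable (S d)) ->
  P A = (bnorm B)%:R^-1 * \sum_(d < N | B d) P (S d).
Proof.
move=> mA hS mS; have := hss A mA; rewrite muE //.
under eq_bigr do rewrite hS muE //.
by rewrite sumEFin -EFinM => -[].
Qed.

Lemma sum_B_const (c : R) : \sum_(d < N | B d) c = (bnorm B)%:R * c.
Proof.
rewrite /bnorm big_mkcond /= natr_sum mulr_suml; apply: eq_bigr => i _.
by case: (B i); rewrite /= ?mul1r ?mul0r.
Qed.

Lemma n_gt0 : 0 < (bnorm B)%:R :> R.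
Proof. by rewrite ltr0n; case: (bnorm B) hn. Qed.

Lemma phi_pre (d : nat) (a b : R) :
  phi N d @^-1` `[a, b] = `[N%:R * a - d%:R, N%:R * b - d%:R].
Proof.
have N0 : 0 < N%:R :> R by rewrite ltr0Sn.
apply/seteqP; split => x /=; rewrite /phi !in_itv /=;
  rewrite ler_pdivlMr // ler_pdivrMr // => /andP [h1 h2]; apply/andP; split; lra.
Qed.


Definition Ar (r : R) : set R := ~` `[-r, 1 + r].

Lemma Ar_meas r : measurable (Ar r).
Proof. by apply: measurableC; apply: measurable_itv. Qed.

Lemma Ar_anti r s : r <= s -> Ar s `<=` Ar r.
Proof.
move=> rs; apply: subsetC => y /=; rewrite !in_itv /= => /andP [h1 h2].
by apply/andP; split; lra.
Qed.

Lemma Ar_le r : 0 <= r -> P (Ar r) <= P (Ar (N%:R * r)).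
Proof.
move=> r0.
rewrite (@ssP _ (fun d : 'I_N => ~` `[N%:R * - r - (d : nat)%:R, N%:R * (1 + r) - (d : nat)%:R])); first last.
- by move=> d; apply: measurableC; apply: measurable_itv.
- by move=> d; rewrite -preimage_setC phi_pre.
- exact: Ar_meas.
apply: (@le_trans _ _ ((bnorm B)%:R^-1 * \sum_(d < N | B d) P (Ar (N%:R * r)))).
  rewrite ler_wpM2l ?invr_ge0 ?ler0n //; apply: ler_sum => d _.
  apply: P_le; [by apply: measurableC; apply: measurable_itv | exact: Ar_meas |].
  apply: subsetC => y /=; rewrite !in_itv /= => /andP [h1 h2].
  have hd : (d : nat)%:R + 1 <= N%:R :> R by rewrite natr1 ler_nat (ltn_ord d).
  have hd0 : 0 <= (d : nat)%:R :> R by rewrite ler0n.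
  move: h1 h2; rewrite mulrN mulrDr mulr1; set t := N%:R * r => h1 h2.
  by apply/andP; split; lra.
rewrite sum_B_const mulrA mulVf ?mul1r //; exact: lt0r_neq0 n_gt0.
Qed.

Lemma Ar_null r : 0 < r -> P (Ar r) = 0.
Proof.
move=> r0; pose F k := Ar (N%:R ^+ k * r).
have hle k : P (Ar r) <= P (F k).
  elim: k => [|k IH]; first by rewrite /F expr0 mul1r.
  apply: (le_trans IH); rewrite /F exprS -mulrA; apply: Ar_le.
  by rewrite mulr_ge0 ?exprn_ge0 ?ler0n // ltW.
have mF k : measurable (F k) by apply: Ar_meas.
have ni : nonincreasing_seq F.
  apply/nonincreasing_seqP => k; apply/subsetPset; apply: Ar_anti.
  rewrite exprS -mulrA ler_peMl ?mulr_ge0 ?exprn_ge0 ?ler0n ?ltW //.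
  by rewrite ltr1n ltnS; apply: leq_trans hN'.
have cap : \bigcap_k F k = set0.
  apply/seteqP; split => // x /= hx.
  pose k := Num.Def.archi_bound (`|x| / r).
  have h2 : `|x| / r < 2 ^+ k by apply: upper_nthrootP.
  have h3 : (2%:R : R) ^+ k <= N%:R ^+ k.
    by rewrite -!natrX ler_nat leq_exp2r // ltnW // ltnS.
  have h4 : `|x| < N%:R ^+ k * r.
    by rewrite -ltr_pdivrMr //; apply: (lt_le_trans h2 h3).
  have := hx k I; rewrite /F /Ar /=; apply; rewrite in_itv /=.
  move: h4; rewrite ltr_norml => /andP [h5 h6]; apply/andP; split; lra.
have F0 : (mu (F 0%N) < +oo)%E.
  by rewrite (le_lt_trans (probability_le1 _ _)) ?ltry.
have mcap : measurable (\bigcap_k F k) by rewrite cap.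
have cvg := @nonincreasing_cvg_mu _ _ R mu F F0 mF mcap ni.
rewrite cap measure0 in cvg.
have : ((P (Ar r))%:E <= 0)%E.
  apply: (cvge_to_ge cvg).
  by apply: nearW => k /=; rewrite muE // lee_fin.
by rewrite lee_fin => h; apply/eqP; rewrite eq_le h P_ge0.
Qed.


Lemma supp : P (~` `[0, 1]) = 0.
Proof.
pose G k := Ar (k.+1%:R^-1).
have mG k : measurable (G k) by apply: Ar_meas.
have sub : ~` `[0, 1] `<=` \bigcup_k G k.
  move=> x /=; rewrite in_itv /= => hx.
  have [xn|xp] := ltP x 0.
    have hx0 : 0 < - x by rewrite oppr_gt0.
    pose k := Num.Def.archi_bound (- x)^-1.
    have hk : (- x)^-1 < k.+1%:R.
      apply: (lt_le_trans (archi_boundP _)); first by rewrite invr_ge0 ltW.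
      by rewrite ler_nat.
    have hk2 : k.+1%:R^-1 < - x.
      by rewrite -[X in _ < X](invrK (- x)) ltf_pV2 ?posrE ?invr_gt0 ?ltr0n.
    exists k => //; rewrite /G /Ar /= in_itv /= => /andP [h1 h2].
    set t := k.+1%:R^-1 in hk2 h1 h2; lra.
  have x1 : 1 < x by rewrite ltNge; apply/negP => h; apply: hx; rewrite xp h.
  have hx0 : 0 < x - 1 by rewrite subr_gt0.
  pose k := Num.Def.archi_bound (x - 1)^-1.
  have hk : (x - 1)^-1 < k.+1%:R.
    apply: (lt_le_trans (archi_boundP _)); first by rewrite invr_ge0 ltW.
    by rewrite ler_nat.
  have hk2 : k.+1%:R^-1 < x - 1.
    by rewrite -[X in _ < X](invrK (x - 1)) ltf_pV2 ?posrE ?invr_gt0 ?ltr0n.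
  exists k => //; rewrite /G /Ar /= in_itv /= => /andP [h1 h2].
  set t := k.+1%:R^-1 in hk2 h1 h2; lra.
have nd : nondecreasing_seq G.
  apply/nondecreasing_seqP => k; apply/subsetPset; apply: Ar_anti.
  by rewrite lef_pV2 ?posrE ?ltr0n // ler_nat.
have mU : measurable (\bigcup_k G k) by apply: bigcup_measurable.
have cvg := @nondecreasing_cvg_mu _ _ R mu G mG mU nd.
have U0 : (mu (\bigcup_k G k) <= 0)%E.
  apply: (cvge_to_le cvg); apply: nearW => k /=.
  by rewrite muE // Ar_null // invr_gt0 ltr0n.
have mC : measurable (~` `[0, 1] : set R) by apply: measurableC; apply: measurable_itv.
apply/eqP; rewrite eq_le P_ge0 andbT -lee_fin -muE //.
by apply: le_trans U0; apply: le_measure; rewrite ?inE.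
Qed.

Lemma P_I : P `[0, 1] = 1.
Proof.
have h : P (~` `[0, 1]) = 1 - P `[0, 1] by apply: P_C; apply: measurable_itv.
rewrite supp in h; lra.
Qed.

Lemma P_restr (X : set R) : measurable X -> P X = P (X `&` `[0, 1]).
Proof.
move=> mX; have mI : measurable (`[0, 1] : set R) by apply: measurable_itv.
have := @measureDI _ _ _ mu X `[0, 1] mX mI.
rewrite (@subset_measure0 _ _ _ mu (X `\` `[0, 1]) (~` `[0, 1])).
- by rewrite add0e /P => ->.
- exact: measurableD.
- exact: measurableC.
- by move=> x [].
- have h := muE _ (measurableC mI); rewrite supp in h; exact: h.
Qed.

Lemma P_full (X : set R) : measurable X -> `[0, 1] `<=` X -> P X = 1.
Proof.
move=> mX sX; apply/eqP; rewrite eq_le P_le1 //= -P_I.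
by apply: P_le => //; apply: measurable_itv.
Qed.

Lemma P_set0 : P set0 = 0.
Proof. by rewrite /P measure0. Qed.

Definition Fc (x : R) := P `[0, x].

Lemma Fc_pre (x : R) : Fc x = (bnorm B)%:R^-1 *
  \sum_(d < N | B d) P `[- (d : nat)%:R, N%:R * x - (d : nat)%:R].
Proof.
rewrite /Fc (@ssP _ (fun d : 'I_N => `[N%:R * 0 - (d : nat)%:R, N%:R * x - (d : nat)%:R])).
- by under eq_bigr do rewrite mulr0 sub0r.
- exact: measurable_itv.
- by move=> d; rewrite phi_pre.
- by move=> d; apply: measurable_itv.
Qed.


Definition bitn (j : nat) : bool := (j < N)%N && B (inord j).
Definition cnt (j : nat) : nat := count bitn (iota 0 j).

Lemma cntS j : cnt j.+1 = (cnt j + bitn j)%N.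
Proof. by rewrite /cnt -addn1 iotaD count_cat /= addn0 add0n. Qed.

Lemma sumB_eq (y : R) j :
  \sum_(d < N | B d) ((d : nat) == j)%:R * y = (bitn j)%:R * y.
Proof.
case: (ltnP j N) => hj.
  rewrite /bitn hj /= big_mkcond (bigD1 (Ordinal hj)) //= eqxx big1 ?addr0.
    have -> : inord j = Ordinal hj :> 'I_N by apply: val_inj; rewrite /= inordK.
    by destruct (B (Ordinal hj)); rewrite /= ?mul1r ?mul0r.
  move=> d hd; case: ifP => // _.
  rewrite (_ : ((d : nat) == j) = false) ?mul0r //; apply/negbTE.
  by apply: contra hd => /eqP e; apply/eqP; apply: val_inj.
rewrite /bitn ltnNge hj /= mul0r big1 // => d _.
rewrite (_ : ((d : nat) == j) = false) ?mul0r //; apply/negbTE.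
by rewrite neq_ltn (leq_trans (ltn_ord d) hj).
Qed.

Lemma sumB_lt j : \sum_(d < N | B d) ((d : nat) < j)%:R = (cnt j)%:R :> R.
Proof.
elim: j => [|j IH]; first by rewrite big1 // => d _; rewrite ltn0.
rewrite cntS natrD -IH -[(bitn j)%:R]mulr1 -sumB_eq -big_split /=.
apply: eq_bigr => d _; rewrite mulr1 -natrD; congr (_%:R).
by rewrite ltnS; case: (ltngtP d j).
Qed.

Lemma bnormE : bnorm B = cnt N.
Proof.
apply/eqP; rewrite -(eqr_nat R) -sumB_lt.
rewrite (eq_bigr (fun _ => 1)) ?sum_B_const ?mulr1 // => d _.
by rewrite ltn_ord.
Qed.

Lemma F0 : Fc 0 = 0.
Proof.
have h : Fc 0 <= (bnorm B)%:R^-1 * ((bitn 0)%:R * Fc 0).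
  rewrite {1}Fc_pre -sumB_eq ler_wpM2l ?invr_ge0 ?ler0n //; apply: ler_sum => d _.
  rewrite mulr0 sub0r; case: (eqVneq (d : nat) 0%N) => [->|hd] /=.
    by rewrite mul1r /Fc oppr0.
  rewrite mul0r P_restr; last exact: measurable_itv.
  rewrite (_ : _ `&` _ = set0) ?P_set0 //; apply/seteqP; split => x //= [].
  rewrite !in_itv /= => /andP [h1 h2] /andP [h3 h4].
  have : 0 < (d : nat)%:R :> R by rewrite ltr0n lt0n.
  lra.
have hb : (bitn 0)%:R * Fc 0 <= Fc 0.
  by rewrite ler_piMl ?P_ge0 // lern1 leq_b1.
have hu : (bnorm B)%:R^-1 <= 2^-1 :> R.
  by rewrite lef_pV2 ?posrE ?ltr0n ?ler_nat //; case: (bnorm B) hn.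
have F0ge : 0 <= Fc 0 by apply: P_ge0.
have h2 : (bnorm B)%:R^-1 * ((bitn 0)%:R * Fc 0) <= 2^-1 * Fc 0.
  apply: (le_trans (ler_wpM2l _ hb)); first by rewrite invr_ge0 ler0n.
  by rewrite ler_wpM2r.
apply/eqP; rewrite eq_le F0ge andbT; lra.
Qed.

Lemma Fkey j v : (j < N)%N -> 0 <= v <= 1 ->
  Fc ((j%:R + v) / N%:R) = (bnorm B)%:R^-1 * ((cnt j)%:R + (bitn j)%:R * Fc v).
Proof.
move=> hj /andP [v0 v1]; rewrite Fc_pre.
have -> : N%:R * ((j%:R + v) / N%:R) = j%:R + v :> R.
  by rewrite mulrC divfK // pnatr_eq0.
congr (_ * _); rewrite -sumB_lt -sumB_eq -big_split /=.
apply: eq_bigr => d _.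
have d0 : 0 <= (d : nat)%:R :> R by rewrite ler0n.
case: (ltngtP d j) => h; rewrite /= ?mul0r ?mul1r ?addr0 ?add0r.
- apply: P_full; first exact: measurable_itv.
  have : (d : nat)%:R + 1 <= j%:R :> R by rewrite natr1 ler_nat.
  move=> hh x /=; rewrite !in_itv /= => /andP [h1 h2]; apply/andP; split; lra.
- have : j%:R + 1 <= (d : nat)%:R :> R by rewrite natr1 ler_nat.
  move=> hh; apply: le_anti; rewrite P_ge0 andbT; apply: (@le_trans _ _ (Fc 0)); last by rewrite F0.
  rewrite P_restr; last exact: measurable_itv.
  apply: P_le; [by apply: measurableI; apply: measurable_itv | exact: measurable_itv |].
  move=> x /= []; rewrite !in_itv /= => /andP [h1 h2] /andP [h3 h4].
  apply/andP; split; lra.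
- rewrite h [X in `[_, X]](_ : _ = v); last by rewrite addrAC subrr add0r.
  rewrite /Fc P_restr; last exact: measurable_itv.
  rewrite [RHS]P_restr; last exact: measurable_itv.
  have j0 : 0 <= j%:R :> R by rewrite ler0n.
  congr P; apply/seteqP; split => x /= []; rewrite ?in_itv /= ?bnd_simp => /andP [h1 h2] /andP [h3 h4]; (split; rewrite /= ?in_itv /= ?bnd_simp; apply/andP; split; lra).
Qed.

Lemma Fgrid j : (j <= N)%N -> Fc (j%:R / N%:R) = (cnt j)%:R / (bnorm B)%:R.
Proof.
rewrite leq_eqVlt => /orP [/eqP ->|hj].
  rewrite divff ?pnatr_eq0 // -bnormE divff ?(lt0r_neq0 n_gt0) //.
  by rewrite /Fc P_I.
have := @Fkey j 0 hj; rewrite addr0 F0 mulr0 addr0 lexx ler01 => ->; last by [].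
by rewrite mulrC.
Qed.

Hypothesis hn2 : (bnorm B <= N')%N.

Lemma clamp_id (x : R) : 0 <= x <= 1 -> Num.min 1 (Num.max 0 x) = x.
Proof. by move=> /andP [h0 h1]; rewrite (max_idPr h0) (min_idPr h1). Qed.

Definition truth (m : nat) : state :=
  ([seq bitn i | i <- iota 0 m.*2], if cnt m.*2 == 0%N then None else Some (bnorm B)).

Lemma cnt_le j k : (j <= k)%N -> (cnt j <= cnt k)%N.
Proof.
move/subnK <-; elim: (k - j)%N => [|t IH]; first by rewrite add0n.
by rewrite addSn cntS; apply: (leq_trans IH); rewrite leq_addr.
Qed.

Lemma cnt_leN j : (j <= N)%N -> (cnt j <= bnorm B)%N.
Proof. by rewrite bnormE; apply: cnt_le. Qed.

Lemma cnt_bits j : count id [seq bitn i | i <- iota 0 j] = cnt j.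
Proof. by rewrite count_map. Qed.

Lemma Wp_in m i : (m.*2.+2 <= N)%N -> 0 <= Wp R N m i <= 1.
Proof.
move=> hm; have N0 : 0 < N%:R :> R by rewrite ltr0n.
elim: i => [|i IH]; rewrite ?Wp0 ?WpS.
  by rewrite divr_ge0 ?ler0n //= ler_pdivrMr // mul1r ler_nat.
move/andP: IH => [h0 h1].
have hh : (m.*2.+1)%:R + 1 <= N%:R :> R by rewrite natr1 ler_nat.
have h2 : 0 <= (m.*2.+1)%:R :> R by rewrite ler0n.
rewrite divr_ge0 ?addr_ge0 //= ler_pdivrMr // mul1r; lra.
Qed.

Lemma v_in m : (m.*2.+2 <= N)%N -> 0 <= ((m.*2)%:R / N%:R : R) <= 1.
Proof.
move=> hm; have N0 : 0 < N%:R :> R by rewrite ltr0n.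
rewrite divr_ge0 ?ler0n //= ler_pdivrMr // mul1r ler_nat.
by apply: (leq_trans _ hm); rewrite leqW.
Qed.

Lemma Kp_in m : (m.*2.+2 <= N)%N -> 0 <= Kp R N m <= 1.
Proof.
move=> hm; have N0 : 0 < N%:R :> R by rewrite ltr0n.
move/andP: (@v_in m hm) => [h0 h1].
have hh : (m.*2.+1)%:R + 1 <= N%:R :> R by rewrite natr1 ler_nat.
have h2 : 0 <= (m.*2.+1)%:R :> R by rewrite ler0n.
rewrite /Kp; set v := (m.*2)%:R / N%:R in h0 h1 *.
rewrite divr_ge0 ?addr_ge0 //= ler_pdivrMr // mul1r; lra.
Qed.

Lemma FW m i : (m.*2.+2 <= N)%N -> cnt m.*2 = 0%N ->
  Fc (Wp R N m i) = zf R (bitn m.*2) (bitn m.*2.+1) (bnorm B) i.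
Proof.
move=> hm c0; elim: i => [|i IH].
  by rewrite Wp0 Fgrid // !cntS c0 add0n.
rewrite WpS Fkey //; last exact: Wp_in.
by rewrite zfS IH cntS c0 add0n mulrC.
Qed.

Lemma FK m : (m.*2.+2 <= N)%N -> Fc (Kp R N m) = (bnorm B)%:R^-1 *
  ((cnt m.*2.+1)%:R + (bitn m.*2.+1)%:R * ((cnt m.*2)%:R / (bnorm B)%:R)).
Proof.
move=> hm; rewrite /Kp Fkey //; last exact: v_in.
by rewrite Fgrid // (leq_trans _ hm) // leqW.
Qed.

Lemma truthS m : (m.*2.+2 <= N)%N -> truth m.+1 =
  ((truth m).1 ++ [:: bitn m.*2; bitn m.*2.+1],
   if (cnt m.*2 + bitn m.*2 + bitn m.*2.+1 == 0)%N then None else Some (bnorm B)).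
Proof.
by move=> hm; rewrite /truth doubleS !cntS -addn2 iotaD map_cat add0n /=.
Qed.

Lemma step_ok m : (m < N./2)%N ->
  step R N (truth m) (Fc (Num.min 1 (Num.max 0 (rawpt R N (truth m))))) = truth m.+1.
Proof.
move=> hm; have hm2 : (m.*2.+2 <= N)%N by rewrite -doubleS -geq_half_double.
have hcn : (cnt m.*2 + bitn m.*2 + bitn m.*2.+1 <= bnorm B)%N.
  by rewrite -!cntS cnt_leN.
have n0 : 0 < (bnorm B)%:R :> R := n_gt0.
have nN : (bnorm B < N)%N by rewrite ltnS.
rewrite truthS //.
case: (eqVneq (cnt m.*2) 0%N) => hc.
- have Ht : truth m = ([seq bitn i | i <- iota 0 m.*2], None) by rewrite /truth hc eqxx.
  rewrite Ht /rawpt /= size_map size_iota half_double clamp_id ?Wp_in // FW //.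
  rewrite /step /= hc add0n.
  move: hcn; rewrite hc add0n.
  case: (bitn m.*2); case: (bitn m.*2.+1) => hcn.
  + rewrite (negbTE (lt0r_neq0 (@zf_pos R true true (bnorm B) N hn isT))) //.
    case: pickP => [[[ta tb] tn] /= /andP [t2 /eqP ht] | hnone].
    * have tab : ta || tb.
        move: ht; case: ta; case: tb => //= ht.
        by move: (@zf_pos R true true (bnorm B) N hn isT); rewrite ht zf00 ltxx.
      have [e1 e2 e3] := @zf_inj R N' true true ta tb (bnorm B) tn N isT (leqnn _) hn nN t2 (ltn_ord tn) isT tab ht.
      by rewrite -e1 -e2 -e3.
    * by have := hnone (true, true, Ordinal nN); rewrite /= hn eqxx.
  + rewrite (negbTE (lt0r_neq0 (@zf_pos R true false (bnorm B) N hn isT))) //.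
    case: pickP => [[[ta tb] tn] /= /andP [t2 /eqP ht] | hnone].
    * have tab : ta || tb.
        move: ht; case: ta; case: tb => //= ht.
        by move: (@zf_pos R true false (bnorm B) N hn isT); rewrite ht zf00 ltxx.
      have [e1 e2 e3] := @zf_inj R N' true false ta tb (bnorm B) tn N isT (leqnn _) hn nN t2 (ltn_ord tn) isT tab ht.
      by rewrite -e1 -e2 -e3.
    * by have := hnone (true, false, Ordinal nN); rewrite /= hn eqxx.
  + rewrite (negbTE (lt0r_neq0 (@zf_pos R false true (bnorm B) N hn isT))) //.
    case: pickP => [[[ta tb] tn] /= /andP [t2 /eqP ht] | hnone].
    * have tab : ta || tb.
        move: ht; case: ta; case: tb => //= ht.
        by move: (@zf_pos R false true (bnorm B) N hn isT); rewrite ht zf00 ltxx.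
      have [e1 e2 e3] := @zf_inj R N' false true ta tb (bnorm B) tn N isT (leqnn _) hn nN t2 (ltn_ord tn) isT tab ht.
      by rewrite -e1 -e2 -e3.
    * by have := hnone (false, true, Ordinal nN); rewrite /= hn eqxx.
  + by rewrite zf00 eqxx.
- have Ht : truth m = ([seq bitn i | i <- iota 0 m.*2], Some (bnorm B)).
    by rewrite /truth (negbTE hc).
  rewrite Ht /rawpt /= size_map size_iota half_double clamp_id ?Kp_in // FK //.
  have hc' : forall x y : nat, (cnt m.*2 + x + y == 0)%N = false.
    by move=> x y; rewrite !addn_eq0 (negbTE hc).
  rewrite hc' /step /= cnt_bits cntS natrD !mulVKf ?lt0r_neq0 //.
  have cpos : 0 < (cnt m.*2)%:R / (bnorm B)%:R :> R.
    by rewrite divr_gt0 // ltr0n lt0n.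
  have hcn' : (cnt m.*2)%:R + (bitn m.*2)%:R + (bitn m.*2.+1)%:R <= (bnorm B)%:R :> R.
    by rewrite -!natrD ler_nat.
  move: hcn'; case: (bitn m.*2); case: (bitn m.*2.+1) => /= hcn'.
  + have c1 : (cnt m.*2)%:R / (bnorm B)%:R < 1 :> R.
      by rewrite ltr_pdivrMr // mul1r; lra.
    set c := (cnt m.*2)%:R / (bnorm B)%:R in cpos c1 *.
    rewrite (_ : _ - _ = 1 + c); last by ring.
    rewrite ifF; last by apply/negbTE; rewrite lt0r_neq0 //; lra.
    rewrite ifF; last by apply/negbTE; apply/eqP => h; lra.
    by rewrite ifF //; apply/negbTE; rewrite -leNgt; lra.
  + rewrite (_ : _ - _ = 1); last by ring.
    by rewrite oner_eq0 eqxx.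
  + have c1 : (cnt m.*2)%:R / (bnorm B)%:R < 1 :> R.
      by rewrite ltr_pdivrMr // mul1r; lra.
    set c := (cnt m.*2)%:R / (bnorm B)%:R in cpos c1 *.
    rewrite (_ : _ - _ = c); last by ring.
    rewrite ifF; last by apply/negbTE; rewrite lt0r_neq0.
    rewrite ifF; last by apply/negbTE; apply/eqP => h; lra.
    by rewrite c1.
  + rewrite (_ : _ - _ = 0); last by ring.
    by rewrite eqxx.
Qed.

Lemma run_inv k : (k <= N./2)%N -> decode R N (run (qs R N) Fc k) = truth k.
Proof.
elim: k => [|k IH] hk; first by rewrite /truth /cnt /=.
rewrite /= decode_rcons IH ?(ltnW hk) // /qs IH ?(ltnW hk) //.
exact: step_ok.
Qed.

Lemma dec_ok : decs R N (run (qs R N) (cdf_of mu) N./2) = B.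
Proof.
have -> : cdf_of mu = Fc by [].
rewrite /decs run_inv //.
have hodd := odd_double_half N.
set k := N./2 in hodd *.
have hle : (bnorm B <= cnt k.*2 + 1)%N.
  move: hodd; case: (odd N) => /= hodd.
    by rewrite bnormE -hodd add1n cntS leq_add2l leq_b1.
  by rewrite bnormE -hodd add0n leq_addr.
have cpos : cnt k.*2 != 0%N.
  by apply/eqP => h; move: hle; rewrite h; apply/negP; rewrite -ltnNge.
rewrite /truth (negbTE cpos) /=.
apply/ffunP => i; rewrite ffunE nth_rcons size_map size_iota.
case: ltnP => hi.
  by rewrite (nth_map 0%N) ?size_iota // nth_iota // add0n /bitn ltn_ord inord_val.
have ei : (i : nat) = k.*2.
  apply/eqP; rewrite eqn_leq hi andbT -ltnS.
  by apply: (leq_trans (ltn_ord i)); rewrite -hodd addnC -[X in (_ <= X)%N]addn1 leq_add2l leq_b1.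
rewrite ei eqxx cnt_bits bnormE.
have hkN : (k.*2 < N)%N by rewrite -ei ltn_ord.
move: hodd hkN; case: (odd N) => /= hodd hkN; last first.
  by move: hkN; rewrite -[X in (_ < X)%N]hodd add0n ltnn.
rewrite -[X in (_ < cnt X)%N]hodd add1n cntS -{1}[cnt k.*2]addn0 ltn_add2l lt0b /bitn hkN /=.
by rewrite -ei inord_val.
Qed.

End Meas.

Theorem theorem2p2 (R : realType) (N : nat) (hN : (3 <= N)%N) :
  exists (k : nat) (q : seq R -> R) (dec : seq R -> {ffun 'I_N -> bool}),
    (k <= N./2)%N /\
    (forall s : seq R, q s \in `[0, 1]) /\
    forall (B : {ffun 'I_N -> bool}), (2 <= bnorm B <= N.-1)%N ->
      forall mu : probability R R, self_similar B mu ->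
        dec (run q (cdf_of mu) k) = B.
Proof.
case: N hN => [//|N'] hN.
have hN' : (2 <= N')%N by [].
exists (N'.+1)./2, (qs R N'.+1), (decs R N'.+1).
split; first by [].
split.
  move=> s; rewrite in_setE /= in_itv /=; apply/andP; split.
    by rewrite le_min ler01 le_max lexx.
  by rewrite ge_min lexx.
move=> B /andP [hn hn2] mu hss.
by apply: dec_ok.
Qed.
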